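(* Let $\sigma,\tau$ be edge-faces and $[\mathcal{F}],[\mathcal{E}]$ two $\mathrm{PGL}(4)$-classes of tetrahedra of flags. Then $[\mathcal{F}],[\mathcal{E}]$ are $(\sigma,\tau)$-glueable if and only if $t^{\mathcal{F}}_\sigma t^{\mathcal{E}}_\tau=1$. Moreover, if they are $(\sigma,\tau)$-glueable then they are $(\sigma',\tau')$-glueable for all $\sigma'\in\{\sigma,\sigma_+,\sigma_-\}$ and $\tau'\in\{\tau,\tau_+,\tau_-\}$.
   Context: Flags: $(V,\eta)$, $\eta$ a plane of $\mathbb{RP}^3$ through $V$; $\mathrm{PGL}(4)$ acts diagonally. A tetrahedron of flags is a non-degenerate ($\eta_i(V_j)=0\iff i=j$) ordered quadruple $(V_m,\eta_m)_{m=1}^4$ with $V_m$ not coplanar such that some projective tetrahedron with vertices $V_m$ has interior disjoint from all $\eta_m$. Edge-faces $\sigma=(ij)k$ are even permutations $[ijkl]$ of $\{1,2,3,4\}$; $\sigma_+=(ki)j$, $\sigma_-=(jk)i$. Triple ratio $t_\sigma=t_{ijk}=\frac{\bar\eta_i(\bar V_j)\bar\eta_j(\bar V_k)\bar\eta_k(\bar V_i)}{\bar\eta_i(\bar V_k)\bar\eta_j(\bar V_i)\bar\eta_k(\bar V_j)}$. Two tetrahedra of flags $\mathcal{F}=(V_m,\eta_m)$, $\mathcal{E}=(W_m,\zeta_m)$ are glued along $(\sigma,\tau)$, with $\sigma=(ij)k$, $\tau=(i'j')k'$, if $(V_i,\eta_i)=(W_{j'},\zeta_{j'})$, $(V_j,\eta_j)=(W_{i'},\zeta_{i'})$,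 $(V_k,\eta_k)=(W_{k'},\zeta_{k'})$. Two classes are $(\sigma,\tau)$-glueable if they have representatives glued along $(\sigma,\tau)$. *)

(* Defs.v *)
(* Real projective 3-space modelled over an arbitrary
   real (ordered) field R; points and planes are nonzero row vectors in R^4
   taken up to nonzero scalars. *)
From HB Require Import structures.
From mathcomp Require Import all_boot all_order all_algebra all_fingroup.
Set Implicit Arguments. Unset Strict Implicit. Unset Printing Implicit Defensive.
Import Order.TTheory GRing.Theory Num.Theory.
Local Open Scope ring_scope.

Section Flags.
Variable R : realFieldType.

(* a flag (V, eta): V a point-vector, eta a plane-covector *)
Definition flag := ('rV[R]_4 * 'rV[R]_4)%type.

Definition pair (e v : 'rV[R]_4) : R := \sum_(i < 4) e 0 i * v 0 i.

Definition is_flag (f : flag) : Prop :=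
  f.1 != 0 /\ f.2 != 0 /\ pair f.2 f.1 = 0.

Definition flag_eq (f f' : flag) : Prop :=
  (exists c : R, c != 0 /\ f.1 = c *: f'.1) /\
  (exists d : R, d != 0 /\ f.2 = d *: f'.2).

(* action of g in GL(4) (descending to PGL(4)); covectors transform by the
   inverse transpose so that pair is preserved *)
Definition act (g : 'M[R]_4) (f : flag) : flag :=
  (f.1 *m g, f.2 *m (invmx g)^T).

Definition tetra_act (g : 'M[R]_4) (F : 'I_4 -> flag) : 'I_4 -> flag :=
  fun m => act g (F m).

(* tetrahedron of flags; indices 1,2,3,4 of the paper are 0,1,2,3 here *)
Definition is_tetra (F : 'I_4 -> flag) : Prop :=
  (forall m, is_flag (F m)) /\
  (forall i j : 'I_4, pair (F i).2 (F j).1 = 0 <-> i = j) /\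
  \det (\matrix_(i < 4, j < 4) (F i).1 0 j) != 0 /\
  (* some projective tetrahedron with vertices V_m (chosen by lifts c_m V_m)
     has interior {sum a_m c_m V_m | a_m > 0} disjoint from every plane eta_k *)
  (exists c : 'I_4 -> R, (forall m, c m != 0) /\
     forall (k : 'I_4) (a : 'I_4 -> R), (forall m, 0 < a m) ->
       pair (F k).2 (\sum_(m < 4) (a m * c m) *: (F m).1) != 0).

(* edge-faces sigma = (ij)k, encoded as the triple (i,j,k) *)
Definition edge_face := ('I_4 * 'I_4 * 'I_4)%type.

Definition is_edge_face (s : edge_face) : Prop :=
  exists p : 'S_4, ~~ odd_perm p /\
    p (@Ordinal 4 0 isT) = s.1.1 /\ p (@Ordinal 4 1 isT) = s.1.2 /\
    p (@Ordinal 4 2 isT) = s.2.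

Definition ef_plus (s : edge_face) : edge_face := (s.2, s.1.1, s.1.2).
Definition ef_minus (s : edge_face) : edge_face := (s.1.2, s.2, s.1.1).

Definition triple_ratio (F : 'I_4 -> flag) (s : edge_face) : R :=
  let: (i, j, k) := s in
  (pair (F i).2 (F j).1 * pair (F j).2 (F k).1 * pair (F k).2 (F i).1) /
  (pair (F i).2 (F k).1 * pair (F j).2 (F i).1 * pair (F k).2 (F j).1).

Definition glued (F E : 'I_4 -> flag) (s t : edge_face) : Prop :=
  let: (i, j, k) := s in
  let: (i', j', k') := t in
  flag_eq (F i) (E j') /\ flag_eq (F j) (E i') /\ flag_eq (F k) (E k').

Definition glueable (F E : 'I_4 -> flag) (s t : edge_face) : Prop :=
  exists g h : 'M[R]_4, g \in unitmx /\ h \in unitmx /\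
    glued (tetra_act g F) (tetra_act h E) s t.

End Flags.

(* Main.v *)
Require Import Defs.
From HB Require Import structures.
From mathcomp Require Import all_boot all_order all_algebra all_fingroup.
From mathcomp Require Import ring lra.
Import Order.TTheory GRing.Theory Num.Theory.
Local Open Scope ring_scope.

Ltac fsc := field; try (by repeat (apply/andP; split)).
Local Notation o0 := (@Ordinal 4 0 isT).
Local Notation o1 := (@Ordinal 4 1 isT).
Local Notation o2 := (@Ordinal 4 2 isT).
Local Notation o3 := (@Ordinal 4 3 isT).

Section Aux.
Variable R : realFieldType.
Implicit Types (e v : 'rV[R]_4) (x y z : flag R).

Lemma pairE e v : pair e v = (e *m v^T) 0 0.
Proof. by rewrite /pair mxE; apply: eq_bigr => i _; rewrite mxE. Qed.

Lemma pair_act (g : 'M[R]_4) e v : g \in unitmx ->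
  pair (e *m (invmx g)^T) (v *m g) = pair e v.
Proof.
move=> gu; rewrite !pairE trmx_mul -mulmxA (mulmxA _ g^T) -trmx_mul.
by rewrite mulmxV // trmx1 mul1mx.
Qed.

Lemma pairZl c e v : pair (c *: e) v = c * pair e v.
Proof. by rewrite !pairE -scalemxAl mxE. Qed.

Lemma pairZr c e v : pair e (c *: v) = c * pair e v.
Proof. by rewrite !pairE linearZ /= -scalemxAr mxE. Qed.

Lemma pair_sum e (a : 'I_4 -> R) (w : 'I_4 -> 'rV[R]_4) :
  pair e (\sum_(m < 4) a m *: w m) = \sum_(m < 4) a m * pair e (w m).
Proof.
rewrite /pair.
under eq_bigr => i _ do rewrite summxE big_distrr.
rewrite exchange_big /=; apply: eq_bigr => m _.
rewrite big_distrr /=; apply: eq_bigr => i _.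
by rewrite mxE mulrCA.
Qed.

Definition tr3 x y z : R :=
  (pair x.2 y.1 * pair y.2 z.1 * pair z.2 x.1) /
  (pair x.2 z.1 * pair y.2 x.1 * pair z.2 y.1).



Lemma tr3_act (g : 'M[R]_4) x y z : g \in unitmx ->
  tr3 (Defs.act g x) (Defs.act g y) (Defs.act g z) = tr3 x y z.
Proof. by move=> gu; rewrite /tr3 /Defs.act /= !pair_act. Qed.

Lemma tr3_eq x y z x' y' z' : flag_eq x x' -> flag_eq y y' -> flag_eq z z' ->
  tr3 x y z = tr3 x' y' z'.
Proof.
case: x y z => [? ?] [? ?] [? ?].
move=> [[c1 [h1 /= ->]] [d1 [k1 /= ->]]] [[c2 [h2 /= ->]] [d2 [k2 /= ->]]]
  [[c3 [h3 /= ->]] [d3 [k3 /= ->]]].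
rewrite /tr3 /= !pairZl !pairZr.
set P1 := pair _ _; set P2 := pair _ _; set P3 := pair _ _.
set Q1 := pair _ _; set Q2 := pair _ _; set Q3 := pair _ _.
have K : d1 * c2 * (d2 * c3) * (d3 * c1) != 0 by rewrite !mulf_neq0.
have -> : d1 * (c2 * P1) * (d2 * (c3 * P2)) * (d3 * (c1 * P3)) =
   (d1 * c2 * (d2 * c3) * (d3 * c1)) * (P1 * P2 * P3) by ring.
have -> : d1 * (c3 * Q1) * (d2 * (c1 * Q2)) * (d3 * (c2 * Q3)) =
   (d1 * c2 * (d2 * c3) * (d3 * c1)) * (Q1 * Q2 * Q3) by ring.
by rewrite invfM mulrACA mulfV // mul1r.
Qed.

Lemma tr3_swap x y z : tr3 y x z = (tr3 x y z)^-1.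
Proof. rewrite /tr3 invf_div; congr (_ / _); ring. Qed.

Lemma tr3_rot x y z : tr3 z x y = tr3 x y z.
Proof. rewrite /tr3; congr (_ / _); ring. Qed.



Lemma tetra_offd (F : 'I_4 -> flag R) i j : is_tetra F -> i != j ->
  pair (F i).2 (F j).1 != 0.
Proof. by move=> [_ [H _]] ij; apply/eqP => /H /eqP; rewrite (negPf ij). Qed.

Lemma tetra_diag (F : 'I_4 -> flag R) i : is_tetra F -> pair (F i).2 (F i).1 = 0.
Proof. by move=> [_ [H _]]; apply/H. Qed.

Lemma row_sign (F : 'I_4 -> flag R) : is_tetra F ->
  exists c : 'I_4 -> R, (forall m, c m != 0) /\
  forall k p q, p != q -> p != k -> q != k ->
    0 < (c p * pair (F k).2 (F p).1) * (c q * pair (F k).2 (F q).1).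
Proof.
move=> HF; have [_ [_ [_ [c [Hc Hint]]]]] := HF.
exists c; split => // k p q pq pk qk.
pose z m := c m * pair (F k).2 (F m).1.
have zp0 : z p != 0 by rewrite mulf_neq0 // tetra_offd // eq_sym.
have zq0 : z q != 0 by rewrite mulf_neq0 // tetra_offd // eq_sym.
rewrite -/(z p) -/(z q) lt_def mulf_neq0 //= leNgt; apply/negP => neg.
pose S := \sum_(m < 4 | (m != p) && (m != q)) z m.
have key : forall al be, 0 < al -> 0 < be -> al * z p + (be * z q + S) != 0.
  move=> al be hal hbe.
  pose a m := if m == p then al else if m == q then be else 1.
  have Ha : forall m, 0 < a m.
    by move=> m; rewrite /a; case: (m == p) => //; case: (m == q).
  have := Hint k a Ha; rewrite pair_sum.
  rewrite (bigD1 p) //= (bigD1 q) /=; last by rewrite eq_sym pq.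
  have qp : (q == p) = false by rewrite eq_sym (negPf pq).
  have ES : \sum_(i < 4 | (i != p) && (i != q)) a i * c i * pair (F k).2 (F i).1 = S.
    by apply: eq_bigr => i /andP[hp hq]; rewrite /a ifN // ifN // mul1r.
  rewrite ES /a eqxx qp eqxx; move=> H; apply: contra H => /eqP <-.
  by rewrite /z !mulrA.
have zz : 0 < z p * z p by rewrite lt_def mulf_neq0 //= -expr2 sqr_ge0.
have zz' : 0 < z q * z q by rewrite lt_def mulf_neq0 //= -expr2 sqr_ge0.
case: (lerP 0 (- S * z p)) => hS.
  have hal : 0 < (- S - z q) / z p.
    have -> : (- S - z q) / z p = ((- S - z q) * z p) / (z p * z p) by field.
    apply: divr_gt0 => //; nra.
  have := key _ _ hal ltr01.
  have -> : (- S - z q) / z p * z p + (1 * z q + S) = 0 by field.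
  by rewrite eqxx.
have hbe : 0 < (- S - z p) / z q.
  have -> : (- S - z p) / z q = ((- S - z p) * z q) / (z q * z q) by field.
  apply: divr_gt0 => //.
  have h1 : 0 < (- S * z p) * (z p * z q) by nra.
  have h2 : 0 < - S * z q.
    have e : (- S * z p) * (z p * z q) = (- S * z q) * (z p * z p) by ring.
    by move: h1; rewrite e pmulr_lgt0.
  nra.
have := key _ _ ltr01 hbe.
have -> : 1 * z p + ((- S - z p) / z q * z q + S) = 0 by field.
by rewrite eqxx.
Qed.

Lemma tetra_delta (F : 'I_4 -> flag R) i j k : is_tetra F ->
  i != j -> j != k -> i != k ->
  pair (F i).2 (F j).1 * pair (F j).2 (F k).1 * pair (F k).2 (F i).1 +
  pair (F i).2 (F k).1 * pair (F j).2 (F i).1 * pair (F k).2 (F j).1 != 0.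
Proof.
move=> HF ij jk ik; have [c [Hc Hs]] := row_sign F HF.
have ji : j != i by rewrite eq_sym.
have kj : k != j by rewrite eq_sym.
have ki : k != i by rewrite eq_sym.
have h1 := Hs i j k jk ji ki.
have h2 := Hs j k i ki kj ij.
have h3 := Hs k i j ij ik jk.
set N := _ * _ * _; set D := _ * _ * _.
have P := mulr_gt0 (mulr_gt0 h1 h2) h3.
have e : c j * pair (F i).2 (F j).1 * (c k * pair (F i).2 (F k).1) *
    (c k * pair (F j).2 (F k).1 * (c i * pair (F j).2 (F i).1)) *
    (c i * pair (F k).2 (F i).1 * (c j * pair (F k).2 (F j).1)) =
    (N * D) * ((c i * c j * c k) * (c i * c j * c k)) by rewrite /N /D; ring.
have sq : 0 < (c i * c j * c k) * (c i * c j * c k).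
  by rewrite lt_def !mulf_neq0 //= -expr2 sqr_ge0.
rewrite e pmulr_lgt0 // in P.
apply/eqP => E; have ED : D = - N by apply/eqP; rewrite -addr_eq0 addrC E.
move: P; rewrite ED mulrN oppr_gt0 ltNge; apply/negP/negPn.
by rewrite -expr2 sqr_ge0.
Qed.

Definition vmat (X : 'I_4 -> flag R) : 'M[R]_4 := \matrix_(i < 4, j < 4) (X i).1 0 j.

Lemma vmat_row (X : 'I_4 -> flag R) r : (X r).1 = delta_mx 0 r *m vmat X.
Proof. by rewrite -rowE; apply/rowP => j; rewrite !mxE. Qed.

Lemma row_flag (X Y : 'I_4 -> flag R) (T : 'M[R]_4) r (c d : R) :
  vmat X \in unitmx -> vmat Y \in unitmx -> T \in unitmx -> c != 0 -> d != 0 ->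
  row r T = c *: delta_mx 0 r ->
  (X r).2 *m (vmat X)^T = d *: ((Y r).2 *m (vmat Y)^T *m T^T) ->
  flag_eq (Defs.act (invmx (vmat X) *m T *m vmat Y) (X r)) (Y r).
Proof.
move=> uX uY uT c0 d0 hT hC.
have ug : invmx (vmat X) *m T *m vmat Y \in unitmx.
  by rewrite !unitmx_mul unitmx_inv uX uT uY.
split.
  exists c; split => //=.
  rewrite vmat_row !mulmxA mulmxK // -rowE hT -scalemxAl -rowE.
  by congr (_ *: _); apply/rowP => j; rewrite !mxE.
exists d; split => //=.
set g := invmx (vmat X) *m T *m vmat Y.
have hX : (X r).2 = d *: ((Y r).2 *m g^T).
  rewrite -[(X r).2]mulmx1 -[1%:M](trmx1) -(mulVmx uX) trmx_mul mulmxA hC.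
  by rewrite /g !trmx_mul -scalemxAl !mulmxA.
by rewrite hX -scalemxAl -mulmxA -trmx_mul mulVmx // trmx1 mulmx1.
Qed.
Lemma arith (a01 a02 a03 a10 a12 a13 a20 a21 a23 b01 b02 b03 b10 b12 b13 b20 b21 b23 : R) :
  a01 != 0 -> a02 != 0 -> a10 != 0 -> a12 != 0 -> a20 != 0 -> a21 != 0 ->
  b01 != 0 -> b02 != 0 -> b10 != 0 -> b12 != 0 -> b20 != 0 -> b21 != 0 ->
  b01 * b12 * b20 + b02 * b10 * b21 != 0 ->
  a01 * a12 * a20 / (a02 * a10 * a21) = b01 * b12 * b20 / (b02 * b10 * b21) ->
  exists la mu x1 x2 x3 al be ga : R,
   (la != 0 /\ mu != 0 /\ al != 0 /\ be != 0 /\ ga != 0) /\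
   (a01 = al * (b01 * mu) /\ a02 = al * b02 /\ a03 = al * (b01 * x2 + b02 * x3 + b03) /\
    a10 = be * (b10 * la) /\ a12 = be * b12 /\ a13 = be * (b10 * x1 + b12 * x3 + b13) /\
    a20 = ga * (b20 * la) /\ a21 = ga * (b21 * mu) /\ a23 = ga * (b20 * x1 + b21 * x2 + b23)).
Proof.
move=> h01 h02 h10 h12 h20 h21 k01 k02 k10 k12 k20 k21 hD htr.
have E : a01 * a12 * a20 * (b02 * b10 * b21) = b01 * b12 * b20 * (a02 * a10 * a21).
  by apply/eqP; rewrite -eqr_div ?mulf_neq0 // htr.
pose al := a02 / b02. pose be := a12 / b12.
pose mu := a01 / (al * b01). pose la := a10 / (be * b10).
pose ga := a20 / (la * b20).
have al0 : al != 0 by rewrite mulf_neq0 ?invr_neq0.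
have be0 : be != 0 by rewrite mulf_neq0 ?invr_neq0.
have mu0 : mu != 0 by rewrite mulf_neq0 // invr_eq0 mulf_neq0.
have la0 : la != 0 by rewrite mulf_neq0 // invr_eq0 mulf_neq0.
have ga0 : ga != 0 by rewrite mulf_neq0 // invr_eq0 mulf_neq0.
pose r1 := a03 / al - b03. pose r2 := a13 / be - b13. pose r3 := a23 / ga - b23.
pose D := b01 * b12 * b20 + b02 * b10 * b21.
pose x1 := (- r1 * b12 * b21 + b01 * b12 * r3 + b02 * b21 * r2) / D.
pose x2 := (r1 * b12 * b20 + b02 * b10 * r3 - b02 * b20 * r2) / D.
pose x3 := (- b01 * b10 * r3 + b01 * b20 * r2 + r1 * b10 * b21) / D.
exists la, mu, x1, x2, x3, al, be, ga.
split; first by do !split.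
have e1 : b01 * x2 + b02 * x3 = r1 by rewrite /x2 /x3 /D; fsc.
have e2 : b10 * x1 + b12 * x3 = r2 by rewrite /x1 /x3 /D; fsc.
have e3 : b20 * x1 + b21 * x2 = r3 by rewrite /x1 /x2 /D; fsc.
split; first by rewrite /mu /al; fsc.
split; first by rewrite /al; fsc.
split; first by rewrite e1 /r1 /al; fsc.
split; first by rewrite /la /be; fsc.
split; first by rewrite /be; fsc.
split; first by rewrite e2 /r2 /be; fsc.
split; first by rewrite /ga /la /be; fsc.
split; last by rewrite e3 /r3 /ga /la /be; fsc.
have -> : ga * (b21 * mu) =
   (a01 * a12 * a20 * (b02 * b10 * b21)) / (b01 * b12 * b20 * (a02 * a10)).
  by rewrite /ga /la /mu /al /be; fsc.
rewrite E; fsc.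
Qed.

Lemma sum4 (f : 'I_4 -> R) : \sum_(i < 4) f i = f o0 + f o1 + f o2 + f o3.
Proof.
rewrite !big_ord_recl big_ord0 addr0 !addrA.
by congr (_ + _ + _ + _); congr f; apply: val_inj.
Qed.

Definition Tm (la mu u1 u2 u3 : R) : 'M[R]_4 := \matrix_(i < 4, j < 4)
  if (val i == 3)%N then (if (val j == 0)%N then u1 else if (val j == 1)%N then u2
                      else if (val j == 2)%N then u3 else 1)
  else if (val i == val j)%N then (if (val i == 0)%N then la else if (val i == 1)%N then mu else 1)
  else 0.

Lemma Tm_unit la mu u1 u2 u3 : la != 0 -> mu != 0 -> Tm la mu u1 u2 u3 \in unitmx.
Proof.
move=> h1 h2; rewrite unitmxE det_trig.
  by rewrite !big_ord_recl big_ord0 unitfE !mxE /= !mulr1 mulf_neq0.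
apply/forallP => i; apply/forallP => j; apply/implyP.
by rewrite mxE; case: i j => [[|[|[|[|i]]]] hi] [[|[|[|[|j]]]] hj].
Qed.
Lemma rowP4 (u v : 'rV[R]_4) : u 0 o0 = v 0 o0 -> u 0 o1 = v 0 o1 ->
  u 0 o2 = v 0 o2 -> u 0 o3 = v 0 o3 -> u = v.
Proof.
move=> h0 h1 h2 h3; apply/rowP => -[[|[|[|[|j]]]] hj] //.
- by rewrite (_ : Ordinal hj = o0) //; exact: val_inj.
- by rewrite (_ : Ordinal hj = o1) //; exact: val_inj.
- by rewrite (_ : Ordinal hj = o2) //; exact: val_inj.
- by rewrite (_ : Ordinal hj = o3) //; exact: val_inj.
Qed.

Lemma entry (v : 'rV[R]_4) (A : 'M[R]_4) j :
  (v *m A^T) 0 j = \sum_(l < 4) v 0 l * A j l.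
Proof. by rewrite mxE; apply: eq_bigr => l _; rewrite mxE. Qed.

Lemma pairM (X : 'I_4 -> flag R) r j :
  ((X r).2 *m (vmat X)^T) 0 j = pair (X r).2 (X j).1.
Proof. by rewrite entry; apply: eq_bigr => l _; rewrite mxE. Qed.

Lemma core (X Y : 'I_4 -> flag R) :
  \det (vmat X) != 0 -> \det (vmat Y) != 0 ->
  (forall r s : 'I_4, r != s -> pair (X r).2 (X s).1 != 0) ->
  (forall r, pair (X r).2 (X r).1 = 0) ->
  (forall r s : 'I_4, r != s -> pair (Y r).2 (Y s).1 != 0) ->
  (forall r, pair (Y r).2 (Y r).1 = 0) ->
  pair (Y o0).2 (Y o1).1 * pair (Y o1).2 (Y o2).1 * pair (Y o2).2 (Y o0).1 +
  pair (Y o0).2 (Y o2).1 * pair (Y o1).2 (Y o0).1 * pair (Y o2).2 (Y o1).1 != 0 ->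
  tr3 (X o0) (X o1) (X o2) = tr3 (Y o0) (Y o1) (Y o2) ->
  exists g : 'M[R]_4, g \in unitmx /\ flag_eq (Defs.act g (X o0)) (Y o0) /\
    flag_eq (Defs.act g (X o1)) (Y o1) /\ flag_eq (Defs.act g (X o2)) (Y o2).
Proof.
move=> dX dY nX zX nY zY hD htr.
have uX : vmat X \in unitmx by rewrite unitmxE unitfE.
have uY : vmat Y \in unitmx by rewrite unitmxE unitfE.
have := @arith (pair (X o0).2 (X o1).1) (pair (X o0).2 (X o2).1) (pair (X o0).2 (X o3).1)
  (pair (X o1).2 (X o0).1) (pair (X o1).2 (X o2).1) (pair (X o1).2 (X o3).1)
  (pair (X o2).2 (X o0).1) (pair (X o2).2 (X o1).1) (pair (X o2).2 (X o3).1)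
  (pair (Y o0).2 (Y o1).1) (pair (Y o0).2 (Y o2).1) (pair (Y o0).2 (Y o3).1)
  (pair (Y o1).2 (Y o0).1) (pair (Y o1).2 (Y o2).1) (pair (Y o1).2 (Y o3).1)
  (pair (Y o2).2 (Y o0).1) (pair (Y o2).2 (Y o1).1) (pair (Y o2).2 (Y o3).1)
  (nX o0 o1 isT) (nX o0 o2 isT) (nX o1 o0 isT) (nX o1 o2 isT) (nX o2 o0 isT) (nX o2 o1 isT)
  (nY o0 o1 isT) (nY o0 o2 isT) (nY o1 o0 isT) (nY o1 o2 isT) (nY o2 o0 isT) (nY o2 o1 isT) hD htr.
move=> [la [mu [u1 [u2 [u3 [al [be [ga [[la0 [mu0 [al0 [be0 ga0]]]]
  [e01 [e02 [e03 [e10 [e12 [e13 [e20 [e21 e23]]]]]]]]]]]]]]]]].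
have uT := @Tm_unit la mu u1 u2 u3 la0 mu0.
exists (invmx (vmat X) *m Tm la mu u1 u2 u3 *m vmat Y); split.
  by rewrite !unitmx_mul unitmx_inv uX uT uY.
split; [|split].
- apply: (@row_flag X Y (Tm la mu u1 u2 u3) o0 la al) => //.
    by apply: rowP4; rewrite !mxE /= ?mulr1 ?mulr0.
  apply: rowP4; rewrite !pairM [in RHS]mxE entry sum4 !pairM !mxE /= ?zX ?zY;
    rewrite ?e01 ?e02 ?e03 ?e10 ?e12 ?e13 ?e20 ?e21 ?e23; ring.
- apply: (@row_flag X Y (Tm la mu u1 u2 u3) o1 mu be) => //.
    by apply: rowP4; rewrite !mxE /= ?mulr1 ?mulr0.
  apply: rowP4; rewrite !pairM [in RHS]mxE entry sum4 !pairM !mxE /= ?zX ?zY;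
    rewrite ?e01 ?e02 ?e03 ?e10 ?e12 ?e13 ?e20 ?e21 ?e23; ring.
- apply: (@row_flag X Y (Tm la mu u1 u2 u3) o2 1 ga) => //; first exact: oner_neq0.
    by apply: rowP4; rewrite !mxE /= ?mulr1 ?mulr0.
  apply: rowP4; rewrite !pairM [in RHS]mxE entry sum4 !pairM !mxE /= ?zX ?zY;
    rewrite ?e01 ?e02 ?e03 ?e10 ?e12 ?e13 ?e20 ?e21 ?e23; ring.
Qed.

Lemma act1 (f : flag R) : Defs.act 1%:M f = f.
Proof. by case: f => a b; rewrite /Defs.act /= invmx1 trmx1 !mulmx1. Qed.

Lemma tetra_det (F : 'I_4 -> flag R) (p : 'S_4) : is_tetra F ->
  \det (vmat (fun r => F (p r))) != 0.
Proof.
move=> [_ [_ [hd _]]].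
have -> : vmat (fun r => F (p r)) = row_perm p (vmat F).
  by apply/matrixP => i j; rewrite !mxE.
by rewrite row_permE det_mulmx det_perm mulf_neq0 // signr_eq0.
Qed.

Lemma tr3_neq0 (F : 'I_4 -> flag R) i j k : is_tetra F ->
  i != j -> j != k -> i != k -> tr3 (F i) (F j) (F k) != 0.
Proof.
move=> HF ij jk ik.
have ji : j != i by rewrite eq_sym.
have kj : k != j by rewrite eq_sym.
have ki : k != i by rewrite eq_sym.
by rewrite /tr3 mulf_neq0 // ?invr_eq0 !mulf_neq0 // tetra_offd.
Qed.

Lemma pdist (p : 'S_4) (a b : 'I_4) : a != b -> p a != p b.
Proof. by rewrite (inj_eq perm_inj). Qed.

Lemma fwd (F E : 'I_4 -> flag R) (p q : 'S_4) : is_tetra F -> is_tetra E ->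
  glueable F E (p o0, p o1, p o2) (q o0, q o1, q o2) ->
  tr3 (F (p o0)) (F (p o1)) (F (p o2)) * tr3 (E (q o0)) (E (q o1)) (E (q o2)) = 1.
Proof.
move=> HF HE [g [h [ug [uh [H1 [H2 H3]]]]]].
have e : tr3 (F (p o0)) (F (p o1)) (F (p o2)) = tr3 (E (q o1)) (E (q o0)) (E (q o2)).
  rewrite -(tr3_act g (F (p o0)) (F (p o1)) (F (p o2)) ug).
  rewrite -(tr3_act h (E (q o1)) (E (q o0)) (E (q o2)) uh).
  exact: tr3_eq.
by rewrite e tr3_swap mulVf // tr3_neq0 // pdist.
Qed.

Lemma bwd (F E : 'I_4 -> flag R) (p q : 'S_4) : is_tetra F -> is_tetra E ->
  tr3 (F (p o0)) (F (p o1)) (F (p o2)) * tr3 (E (q o0)) (E (q o1)) (E (q o2)) = 1 ->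
  glueable F E (p o0, p o1, p o2) (q o0, q o1, q o2).
Proof.
move=> HF HE H.
pose q' := (tperm o0 o1 * q)%g.
have q0 : q' o0 = q o1 by rewrite permM tpermL.
have q1 : q' o1 = q o0 by rewrite permM tpermR.
have q2 : q' o2 = q o2 by rewrite permM tpermD.
have nz : tr3 (E (q o0)) (E (q o1)) (E (q o2)) != 0 by rewrite tr3_neq0 // pdist.
have htr : tr3 (F (p o0)) (F (p o1)) (F (p o2)) =
    tr3 (E (q' o0)) (E (q' o1)) (E (q' o2)).
  rewrite q0 q1 q2 (tr3_swap (E (q o0)) (E (q o1)) (E (q o2))).
  by rewrite -[LHS]mulr1 -(mulfV nz) mulrA H mul1r.
have := @core (fun r => F (p r)) (fun r => E (q' r)) (tetra_det F p HF) (tetra_det E q' HE)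
  (fun r s rs => tetra_offd F (p r) (p s) HF (pdist p r s rs))
  (fun r => tetra_diag F (p r) HF)
  (fun r s rs => tetra_offd E (q' r) (q' s) HE (pdist q' r s rs))
  (fun r => tetra_diag E (q' r) HE).
rewrite /= q0 q1 q2 in htr *.
move=> /(_ _ htr) [].
  by rewrite tetra_delta // pdist.
move=> g [ug [h0 [h1 h2]]].
exists g, 1%:M; split => //; split; first exact: unitmx1.
by rewrite /glued /tetra_act !act1.
Qed.

Lemma rot_perm (F : 'I_4 -> flag R) (p : 'S_4) (s' : edge_face) :
  let s := (p o0, p o1, p o2) in
  (s' = s \/ s' = ef_plus s \/ s' = ef_minus s) ->
  exists p' : 'S_4, s' = (p' o0, p' o1, p' o2) /\
    tr3 (F (p' o0)) (F (p' o1)) (F (p' o2)) = tr3 (F (p o0)) (F (p o1)) (F (p o2)).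
Proof.
move=> /= [->|[->|->]].
- by exists p.
- exists (tperm o1 o2 * tperm o0 o2 * p)%g.
  rewrite !permM !permE /=.
  by split; [|rewrite tr3_rot].
- exists (tperm o0 o2 * tperm o1 o2 * p)%g.
  rewrite !permM !permE /=.
  by split; [|rewrite tr3_rot tr3_rot].
Qed.

End Aux.
Arguments tr3 {R}.

Theorem lemma3p1 (R : realFieldType) (F E : 'I_4 -> flag R)
    (s t : edge_face) :
  is_edge_face s -> is_edge_face t -> is_tetra F -> is_tetra E ->
  (glueable F E s t <-> triple_ratio F s * triple_ratio E t = 1) /\
  (glueable F E s t ->
     forall s' t' : edge_face,
       (s' = s \/ s' = ef_plus s \/ s' = ef_minus s) ->
       (t' = t \/ t' = ef_plus t \/ t' = ef_minus t) ->
       glueable F E s' t').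
Proof.
move=> [p [_ [hp0 [hp1 hp2]]]] [q [_ [hq0 [hq1 hq2]]]] HF HE.
have -> : s = (p o0, p o1, p o2) by case: s hp0 hp1 hp2 => [[? ?] ?] /= -> -> ->.
have -> : t = (q o0, q o1, q o2) by case: t hq0 hq1 hq2 => [[? ?] ?] /= -> -> ->.
have trE : forall (G : 'I_4 -> flag R) a b c,
  triple_ratio G (a, b, c) = tr3 (G a) (G b) (G c) by [].
rewrite !trE; split.
  by split; [exact: (@fwd _ F E p q HF HE) | exact: (@bwd _ F E p q HF HE)].
move=> Hg s' t' hs ht.
have H1 := @fwd _ F E p q HF HE Hg.
have [p' [-> ep]] := @rot_perm _ F p s' hs.
have [q' [-> eq]] := @rot_perm _ E q t' ht.
by apply: (@bwd _ F E p' q' HF HE); rewrite ep eq.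
Qed.
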